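(* Let $f_1,\ldots,f_{i+1}\in R$, $I_i=\langle f_1,\ldots,f_i\rangle$, $I_{i+1}=\langle f_1,\ldots,f_{i+1}\rangle$ with $f_{i+1}\notin I_i$. Let $g_1,\ldots,g_M\in I_i$ be such that $\{g_1,\ldots,g_M\}$ is a Gröbner basis of $I_i$, let $p_1,\ldots,p_\ell\in I_{i+1}\setminus\{0\}$, $d_1,\ldots,d_\ell\in\mathbb{k}\setminus\{0\}$, $\tau_1,\ldots,\tau_\ell\in\mathbb{M}$, and let $$G=\{(\sigma_1\mathbf{e}_{j_1},g_1),\ldots,(\sigma_M\mathbf{e}_{j_M},g_M)\}\cup\{(\mathbf{e}_{i+1},f_{i+1}),(d_1\tau_1\mathbf{e}_{i+1},p_1),\ldots,(d_\ell\tau_\ell\mathbf{e}_{i+1},p_\ell)\}$$ with $j_1,\ldots,j_M\le i$. Assume that for every $(c\sigma\mathbf{e}_j,g)\in G$ one has $c\sigma\mathbf{e}_j\in\mathrm{sig}(g)$ and $\sigma\mathbf{e}_j=\mathrm{minsig}(g)$. Assume further that for every two elements $(c\sigma\mathbf{e}_{i+1},p),(d\tau\mathbf{e}_j,q)\in G$ with $p\ne q$, writing $u=t_{p,q}/t_p$ and $v=t_{p,q}/t_q$ and assuming $u\sigma\mathbf{e}_{i+1}\succeq v\tau\mathbf{e}_j$, one of the following holds: (i) $u\sigma\mathbf{e}_{i+1}=v\tau\mathbf{e}_j$ (as monic monomial signatures, i.e. $j=i+1$ and $u\sigma=v\tau$); or (ii) $u\sigma\mathbf{e}_{i+1}\succ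 v\tau\mathbf{e}_j$ and $(u\sigma\mathbf{e}_{i+1},\mathrm{S}(p,q))$ has a standard representation with respect to $G$. Then $\widehat G=\{g:(c\sigma\mathbf{e}_j,g)\in G\text{ for some } c\sigma\mathbf{e}_j\}$ is a Gröbner basis of $I_{i+1}$.
   Context: $R=\mathbb{k}[x_1,\ldots,x_n]$ over a field $\mathbb{k}$, $\mathbb{M}$ its monoid of monomials, $<$ a degree-compatible monomial ordering. For nonzero $p$: $t_p=\mathrm{lm}(p)$ (leading monomial), $c_p=\mathrm{lc}(p)$ (leading coefficient), $t_{p,q}=\mathrm{lcm}(t_p,t_q)$. The S-polynomial is $\mathrm{S}(p,q)=\frac{t_{p,q}}{t_p}p-\frac{c_p}{c_q}\frac{t_{p,q}}{t_q}q$. A standard representation of $s\in R$ with respect to a finite list $(g_1,\ldots,g_N)$ of polynomials is a tuple $(h_1,\ldots,h_N)$ in $R^N$ with $s=\sum h_kg_k$ and, for each $k$, $h_k=0$ or $\mathrm{lm}(h_k)\mathrm{lm}(g_k)\le\mathrm{lm}(s)$. Signatures: $\mathbf{e}_1,\ldots,\mathbf{e}_{i+1}$ are the canonical generators of $R^{i+1}$; a signature is a formal expression $c\tau\mathbf{e}_j$ ($c\in\mathbb{k}\setminus\{0\}$, $\tau\in\mathbb{M}$). For $p\in I_{i+1}$, if $p=h_1f_1+\cdots+h_jf_j$ with $j\le i+1$ and $h_j\ne0$, then $\mathrm{lc}(h_j)\mathrm{lm}(h_j)\mathbf{e}_j$ is a signature of $p$; $\mathrm{sig}(p)$ is the set of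 all of them. Order: $c\sigma\mathbf{e}_j\prec d\tau\mathbf{e}_k$ iff $j<k$, or $j=k$ and $\sigma<\tau$ (restricted to monic monomial signatures $\tau\mathbf{e}_j$ this is a well-ordering). $\mathrm{minsig}(p)$ is the unique $\prec$-minimal monic signature $\tau\mathbf{e}_j$ of $p$ (i.e. with $1\cdot\tau\mathbf{e}_j\in\mathrm{sig}(p)$). Signature standard representation: let $G=\{(c_k\mu_k\mathbf{e}_{j_k},g_k)\}_{k=1}^N$ be a finite set of pairs with $g_k\in I_{i+1}$ and $\mu_k\mathbf{e}_{j_k}=\mathrm{minsig}(g_k)$. A pair $(c\sigma\mathbf{e}_{i+1},s)$ with $s\in I_{i+1}$ has a standard representation with respect to $G$ if $c\sigma\mathbf{e}_{i+1}\in\mathrm{sig}(s)$ and there exist $h_1,\ldots,h_N\in R$ such that $(h_1,\ldots,h_N)$ is a standard representation of $s$ with respect to $(g_1,\ldots,g_N)$ and, for each $k$, $h_k=0$ or $\mathrm{lm}(h_k)\,\mathrm{minsig}(g_k)\preceq\sigma\mathbf{e}_{i+1}$ (where $t\cdot\mu\mathbf{e}_j=(t\mu)\mathbf{e}_j$). *)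

(* Defs.v *)
From HB Require Import structures.
From mathcomp Require Import all_boot all_order all_algebra.
From mathcomp.multinomials Require Import mpoly.

Set Implicit Arguments.
Unset Strict Implicit.
Unset Printing Implicit Defensive.
Import Order.TTheory GRing.Theory.
Local Open Scope ring_scope.

(* Monomial orderings on 'X_{1..n} (monomials; multiplication of      *)
(* monomials is written additively: m1 + m2).                          *)
Record monomial_order (n : nat) := MonomialOrder {
  mo_le : rel 'X_{1..n};
  mo_refl : reflexive mo_le;
  mo_anti : antisymmetric mo_le;
  mo_trans : transitive mo_le;
  mo_total : total mo_le;
  mo_mul : forall m1 m2 m : 'X_{1..n}, mo_le m1 m2 -> mo_le (m1 + m)%MM (m2 + m)%MM;
  mo_wf : well_founded (fun a b : 'X_{1..n} => mo_le a b && (a != b))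
}.

Definition mo_lt n (O : monomial_order n) (a b : 'X_{1..n}) :=
  mo_le O a b && (a != b).

Definition degree_compatible n (O : monomial_order n) :=
  forall a b : 'X_{1..n}, (mdeg a < mdeg b)%N -> mo_lt O a b.

Section Poly.
Variables (K : fieldType) (n : nat) (O : monomial_order n).
Local Notation poly := {mpoly K[n]}.
Local Notation mon := 'X_{1..n}.

(* leading monomial: the O-maximum of the support (0%MM for p = 0) *)
Definition lm (p : poly) : mon :=
  foldr (fun m acc => if mo_le O acc m then m else acc) 0%MM (msupp p).
Definition lc (p : poly) : K := p@_(lm p).

Definition spoly (p q : poly) : poly :=
  let t := mlcm (lm p) (lm q) in
  'X_[(t - lm p)%MM] * p - (lc p / lc q) *: ('X_[(t - lm q)%MM] * q).

(* The ideal <f_1, ..., f_N> (generators indexed from 1). *)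
Definition in_ideal (f : nat -> poly) (N : nat) (p : poly) : Prop :=
  exists h : nat -> poly, p = \sum_(1 <= k < N.+1) h k * f k.

Definition is_GB (I : poly -> Prop) (G : seq poly) : Prop :=
  (forall g, g \in G -> I g) /\
  (forall p, I p -> p != 0 ->
     exists2 g, g \in G & (g != 0) && (lm g <= lm p)%MM).

(* c tau e_j \in sig(p), for p in I_N = <f_1,...,f_N> (so 1 <= j <= N) *)
Definition in_sig (f : nat -> poly) (N : nat) (p : poly) (c : K) (tau : mon)
    (j : nat) : Prop :=
  [/\ (1 <= j)%N, (j <= N)%N &
   exists h : nat -> poly,
     [/\ p = \sum_(1 <= k < j.+1) h k * f k, h j != 0,
         lc (h j) = c & lm (h j) = tau]].

(* order on monic monomial signatures tau e_j *)
Definition sig_le (s1 s2 : mon * nat) : bool :=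
  (s1.2 < s2.2)%N || ((s1.2 == s2.2) && mo_le O s1.1 s2.1).
Definition sig_lt (s1 s2 : mon * nat) : bool :=
  (s1.2 < s2.2)%N || ((s1.2 == s2.2) && mo_lt O s1.1 s2.1).

Definition is_minsig (f : nat -> poly) (N : nat) (p : poly) (tau : mon)
    (j : nat) : Prop :=
  in_sig f N p 1 tau j /\
  forall tau' j', in_sig f N p 1 tau' j' -> sig_le (tau, j) (tau', j').

(* Elements (c mu e_j, g) of a set G of signature/polynomial pairs. *)
Record sentry := SEntry {
  ecoef : K; emon : mon; eidx : nat; epol : poly }.

Definition sentry0 := SEntry 0 0%MM 0 0.

(* (c sigma e_N, s) has a standard representation w.r.t. G (inside I_N).
   The monic signature minsig(g_k) is the stored mu_k e_{j_k}. *)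
Definition std_rep (f : nat -> poly) (N : nat) (G : seq sentry)
    (c : K) (sigma : mon) (s : poly) : Prop :=
  in_sig f N s c sigma N /\
  exists h : 'I_(size G) -> poly,
    s = \sum_(k < size G) h k * epol (nth sentry0 G k) /\
    forall k : 'I_(size G),
      h k = 0 \/
      (mo_le O (lm (h k) + lm (epol (nth sentry0 G k)))%MM (lm s) /\
       sig_le ((lm (h k) + emon (nth sentry0 G k))%MM, eidx (nth sentry0 G k))
              (sigma, N)).

End Poly.

(* Main.v *)
Require Import Defs.
From HB Require Import structures.
From mathcomp Require Import all_boot all_order all_algebra.
From mathcomp.multinomials Require Import mpoly.
From mathcomp Require Import zify ring.
Import GRing.Theory.
Local Open Scope ring_scope.
Set Implicit Arguments.
Unset Strict Implicit.
Unset Printing Implicit Defensive.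

Section Basics.
Variables (K : fieldType) (n : nat) (O : monomial_order n).
Local Notation poly := {mpoly K[n]}.
Local Notation mon := 'X_{1..n}.
Local Notation le := (mo_le O).
Local Notation lt := (mo_lt O).
Implicit Types (p q : poly).

Lemma le_refl a : le a a. Proof. exact: mo_refl. Qed.
Lemma le_trans a b c : le a b -> le b c -> le a c.
Proof. by move=> h1 h2; apply: (mo_trans h1 h2). Qed.
Lemma le_anti a b : le a b -> le b a -> a = b.
Proof. by move=> h1 h2; apply: (@mo_anti n O); rewrite h1 h2. Qed.
Lemma le_total a b : le a b \/ le b a.
Proof. by case/orP: (mo_total O a b); [left|right]. Qed.
Lemma ltW a b : lt a b -> le a b. Proof. by case/andP. Qed.
Lemma lt_neq a b : lt a b -> a <> b. Proof. by case/andP=> _ /eqP. Qed.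
Lemma ltE a b : lt a b = le a b && (a != b). Proof. by []. Qed.
Lemma lt_le_trans a b c : lt a b -> le b c -> lt a c.
Proof.
move=> /andP[h1 h2] h3; rewrite ltE (le_trans h1 h3) /=.
apply/eqP=> E; subst c; move/eqP: h2; apply; exact: le_anti.
Qed.
Lemma le_lt_trans a b c : le a b -> lt b c -> lt a c.
Proof.
move=> h1 /andP[h2 h3]; rewrite ltE (le_trans h1 h2) /=.
apply/eqP=> E; subst c; move/eqP: h3; apply; exact: le_anti.
Qed.
Lemma lt_irr a : ~ lt a a. Proof. by move/lt_neq. Qed.
Lemma le_lt_asym a b : le a b -> lt b a -> False.
Proof. by move=> h1 h2; apply: (lt_irr (lt_le_trans h2 h1)). Qed.
Lemma le_addr a b c : le a b -> le (a + c)%MM (b + c)%MM.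
Proof. exact: mo_mul. Qed.
Lemma le_addl c a b : le a b -> le (c + a)%MM (c + b)%MM.
Proof. by move=> h; rewrite ![(c + _)%MM]addmC; apply: le_addr. Qed.
Lemma lt_addr a b c : lt a b -> lt (a + c)%MM (b + c)%MM.
Proof.
move=> /andP[h1 h2]; rewrite ltE le_addr //=; apply/eqP=> /addIm E.
by rewrite E eqxx in h2.
Qed.
Lemma lt_addl c a b : lt a b -> lt (c + a)%MM (c + b)%MM.
Proof. by move=> h; rewrite ![(c + _)%MM]addmC; apply: lt_addr. Qed.
Lemma le_addr_canc a b c : le (a + c)%MM (b + c)%MM -> le a b.
Proof.
move=> h; case: (le_total a b) => // h2.
have := le_anti h (le_addr c h2) => /addIm ->; exact: le_refl.
Qed.
Lemma le_addl_canc c a b : le (c + a)%MM (c + b)%MM -> le a b.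
Proof. by rewrite ![(c + _)%MM]addmC; apply: le_addr_canc. Qed.
Lemma lt_addl_canc c a b : lt (c + a)%MM (c + b)%MM -> lt a b.
Proof.
move=> /andP[h1 h2]; rewrite ltE (le_addl_canc h1) /=.
by apply: contra h2 => /eqP ->.
Qed.

Lemma le0m m : le 0%MM m.
Proof.
suff H : forall m, le m 0%MM -> m = 0%MM.
  by case: (le_total 0%MM m) => // /H ->; exact: le_refl.
move=> {}m; induction m as [m IH] using (well_founded_induction (mo_wf O)).
move=> hm; apply/eqP; apply/negPn/negP => nz.
have h1 : le (m + m)%MM m by have := le_addr m hm; rewrite add0m.
have h2 : (m + m)%MM != m.
  apply: contra nz => /eqP E; apply/eqP; apply: (@addIm _ m); by rewrite add0m.
have := IH (m + m)%MM ltac:(by rewrite h1 h2) (le_trans h1 hm) => E.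
move/eqP: nz; apply; apply/mnmP => x; move/mnmP: E => /(_ x).
rewrite !mnmE; lia.
Qed.

Lemma le_div a b : (a <= b)%MM -> le a b.
Proof.
move=> h; rewrite -(submK h); have := le_addr a (le0m (b - a)%MM).
by rewrite add0m.
Qed.

Lemma mon_arith1 (L t lq w : mon) : (t <= L)%MM -> (lq <= t)%MM ->
  L = (w + lq)%MM -> w = ((L - t) + (t - lq))%MM.
Proof.
move=> /mnm_lepP h1 /mnm_lepP h2 /mnmP h3; apply/mnmP => x.
have := h1 x; have := h2 x; have := h3 x; rewrite !mnmE; lia.
Qed.
Lemma mon_arith2 (L t lr : mon) : (t <= L)%MM -> (lr <= t)%MM ->
  (L - lr)%MM = ((L - t) + (t - lr))%MM.
Proof.
move=> /mnm_lepP h1 /mnm_lepP h2; apply/mnmP => x.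
have := h1 x; have := h2 x; rewrite !mnmE; lia.
Qed.

Lemma foldr_max (s : seq mon) :
  let F := foldr (fun m acc => if le acc m then m else acc) 0%MM s in
  (forall m, m \in s -> le m F) /\ (s != [::] -> F \in s).
Proof.
elim: s => [|x s [IH1 IH2]] //=.
set F := foldr _ _ s in IH1 IH2 *.
case: ifP => hx.
  split=> [m|]; last by rewrite mem_head.
  rewrite in_cons => /orP[/eqP->|/IH1 h]; first exact: le_refl.
  exact: le_trans h hx.
have hx' : le x F by case: (le_total F x) => //; rewrite hx.
split=> [m|_]; first by rewrite in_cons => /orP[/eqP->|/IH1].
have [sE|sne] := eqVneq s [::].
  by move: hx; rewrite /F sE /= le0m.
by rewrite in_cons IH2 ?orbT.
Qed.

Lemma lm_max (p : poly) m : m \in msupp p -> le m (lm O p).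
Proof. exact: (proj1 (foldr_max (msupp p))). Qed.
Lemma lm_in (p : poly) : p != 0 -> lm O p \in msupp p.
Proof. by move=> nz; apply: (proj2 (foldr_max (msupp p))); rewrite msupp_eq0. Qed.
Lemma lc_nz (p : poly) : p != 0 -> lc O p != 0.
Proof. by move=> nz; rewrite /lc -mcoeff_msupp lm_in. Qed.

Definition supp_in (p : poly) (P : mon -> Prop) := forall m, m \in msupp p -> P m.
Definition bnd p T := supp_in p (fun m => le m T).
Definition sbnd p T := supp_in p (fun m => lt m T).

Lemma supp_in0 P : supp_in 0 P.
Proof. by move=> m; rewrite mcoeff_msupp mcoeff0 eqxx. Qed.
Lemma supp_inD p q P : supp_in p P -> supp_in q P -> supp_in (p + q) P.
Proof. by move=> h1 h2 m /msuppD_le; rewrite mem_cat => /orP[/h1|/h2]. Qed.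
Lemma supp_inN p P : supp_in p P -> supp_in (- p) P.
Proof. by move=> h m; rewrite (perm_mem (msuppN p)) => /h. Qed.
Lemma supp_inB p q P : supp_in p P -> supp_in q P -> supp_in (p - q) P.
Proof. by move=> h1 h2; apply: supp_inD => //; apply: supp_inN. Qed.
Lemma supp_inZ c p P : supp_in p P -> supp_in (c *: p) P.
Proof. by move=> h m /msuppZ_le /h. Qed.
Lemma supp_in_sum (I : finType) (F : I -> poly) P :
  (forall k, supp_in (F k) P) -> supp_in (\sum_k F k) P.
Proof.
move=> h; apply: (big_ind (fun x => supp_in x P)) => //.
  exact: supp_in0.
by move=> x y; apply: supp_inD.
Qed.
Lemma supp_in_imp p (P Q : mon -> Prop) :
  (forall m, P m -> Q m) -> supp_in p P -> supp_in p Q.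
Proof. by move=> h1 h2 m /h2 /h1. Qed.

Lemma bnd_lm p : bnd p (lm O p). Proof. exact: lm_max. Qed.
Lemma bnd_le p A B : bnd p A -> le A B -> bnd p B.
Proof. by move=> h1 h2 m /h1 h; apply: le_trans h h2. Qed.
Lemma bnd_lt p A B : bnd p A -> lt A B -> sbnd p B.
Proof. by move=> h1 h2 m /h1 h; apply: le_lt_trans h h2. Qed.
Lemma bnd_lm_le p T : p != 0 -> bnd p T -> le (lm O p) T.
Proof. by move=> nz h; apply: h; apply: lm_in. Qed.
Lemma sbnd_lm p T : p != 0 -> sbnd p T -> lt (lm O p) T.
Proof. by move=> nz h; apply: h; apply: lm_in. Qed.
Lemma bnd_coef0 p T : bnd p T -> p@_T = 0 -> sbnd p T.
Proof.
move=> h h0 m hm; rewrite ltE h //=; apply/eqP => E; subst m.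
by move: hm; rewrite mcoeff_msupp h0 eqxx.
Qed.
Lemma bnd_lmE p T : bnd p T -> p@_T != 0 -> lm O p = T.
Proof.
move=> h h0; have nz : p != 0 by apply: contra h0 => /eqP ->; rewrite mcoeff0.
apply: le_anti; first exact: bnd_lm_le.
by apply: lm_max; rewrite mcoeff_msupp.
Qed.
Lemma coef_gt p m : lt (lm O p) m -> p@_m = 0.
Proof.
move=> h; apply/eqP; apply/negPn/negP; rewrite -mcoeff_msupp => /lm_max h2.
exact: le_lt_asym h2 h.
Qed.
Lemma bndM p q A B : bnd p A -> bnd q B -> bnd (p * q) (A + B)%MM.
Proof.
move=> h1 h2 m /msuppM_le /allpairsP [[m1 m2] /= [i1 i2 ->]].
apply: (@le_trans _ (A + m2)%MM); first exact/le_addr/h1.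
exact/le_addl/h2.
Qed.
Lemma bndX w : bnd ('X_[w] : poly) w.
Proof. by move=> m; rewrite msuppX mem_seq1 => /eqP ->; apply: le_refl. Qed.
Lemma coefXM w (q : poly) m : ('X_[w] * q)@_(w + m) = q@_m.
Proof. by rewrite -commr_mpolyX mcoeffMX. Qed.
Lemma lmXM w (q : poly) : q != 0 -> lm O ('X_[w] * q) = (w + lm O q)%MM.
Proof.
move=> nz; apply: bnd_lmE; first by apply: bndM; [apply: bndX | apply: bnd_lm].
by rewrite coefXM; apply: lc_nz.
Qed.
Lemma lmZ c (p : poly) : c != 0 -> lm O (c *: p) = lm O p.
Proof.
move=> nz; have [->|pnz] := eqVneq p 0; first by rewrite scaler0.
apply: bnd_lmE; first by apply: supp_inZ; apply: bnd_lm.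
by rewrite mcoeffZ mulf_neq0 // lc_nz.
Qed.
Lemma lm0 : lm O (0 : poly) = 0%MM.
Proof.
have := proj2 (foldr_max (msupp (0:poly))).
by rewrite /lm; case: (msupp 0) (msupp_eq0 (0 : poly)) => //; rewrite eqxx.
Qed.

End Basics.

Section Ideals.
Variables (K : fieldType) (n : nat) (O : monomial_order n).
Variable f : nat -> {mpoly K[n]}.
Local Notation poly := {mpoly K[n]}.
Implicit Types (p q : poly).

Lemma ideal0 N : in_ideal f N 0.
Proof. by exists (fun _ => 0); rewrite big1 // => k _; rewrite mul0r. Qed.
Lemma idealD N p q : in_ideal f N p -> in_ideal f N q -> in_ideal f N (p + q).
Proof.
move=> [h1 ->] [h2 ->]; exists (fun k => h1 k + h2 k).
by rewrite -big_split /=; apply: eq_bigr => k _; rewrite mulrDl.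
Qed.
Lemma idealM N a p : in_ideal f N p -> in_ideal f N (a * p).
Proof.
move=> [h ->]; exists (fun k => a * h k).
by rewrite mulr_sumr; apply: eq_bigr => k _; rewrite mulrA.
Qed.
Lemma idealN N p : in_ideal f N p -> in_ideal f N (- p).
Proof. by move=> h; rewrite -mulN1r; apply: idealM. Qed.
Lemma idealB N p q : in_ideal f N p -> in_ideal f N q -> in_ideal f N (p - q).
Proof. by move=> h1 h2; apply: idealD => //; apply: idealN. Qed.
Lemma idealZ N c p : in_ideal f N p -> in_ideal f N (c *: p).
Proof. by move=> h; rewrite -mul_mpolyC; apply: idealM. Qed.
Lemma ideal_sum N (I : finType) (F : I -> poly) :
  (forall k, in_ideal f N (F k)) -> in_ideal f N (\sum_k F k).
Proof.
move=> h; apply: (big_ind (in_ideal f N)) => //; first exact: ideal0.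
by move=> x y; apply: idealD.
Qed.

Lemma ideal_S N p :
  in_ideal f N.+1 p <-> exists h, in_ideal f N (p - h * f N.+1).
Proof.
split.
  move=> [h0 E]; exists (h0 N.+1); exists h0.
  by rewrite E big_nat_recr //= addrK.
move=> [h [h0 E]]; exists (fun k => if k == N.+1 then h else h0 k).
rewrite big_nat_recr //= eqxx.
have -> : \sum_(1 <= k < N.+1) (if k == N.+1 then h else h0 k) * f k =
          \sum_(1 <= k < N.+1) h0 k * f k.
  apply: eq_big_nat => k /andP[_ hk]; rewrite ifF //.
  by apply/eqP => E'; rewrite E' ltnn in hk.
by rewrite -E subrK.
Qed.

Lemma ideal_mono N p : in_ideal f N p -> in_ideal f N.+1 p.
Proof. by move=> h; apply/ideal_S; exists 0; rewrite mul0r subr0. Qed.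

Lemma ideal_monoN j N p : (j <= N)%N -> in_ideal f j p -> in_ideal f N p.
Proof.
elim: N => [|N IH]; first by rewrite leqn0 => /eqP ->.
rewrite leq_eqVlt => /orP[/eqP -> //|hj] h.
by apply: ideal_mono; apply: IH.
Qed.

Lemma in_sig_rep N P c s j : in_sig O f N.+1 P c s j ->
  exists hh, [/\ in_ideal f N (P - hh * f N.+1),
     (j = N.+1 -> [/\ hh != 0, lc O hh = c & lm O hh = s]) &
     (j <> N.+1 -> hh = 0)].
Proof.
move=> [h1 hj [h [HP hnz hlc hlm]]].
have [jE|jne] := eqVneq j N.+1.
  subst j; exists (h N.+1); split => //.
  by exists h; rewrite HP big_nat_recr //= addrK.
exists 0; split => //; last by move/eqP: jne.
rewrite mul0r subr0; apply: (@ideal_monoN j); first by rewrite -ltnS ltn_neqAle jne hj.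
by exists h.
Qed.

Lemma in_sig_ideal N P c s j : in_sig O f N P c s j -> in_ideal f N P.
Proof. by move=> [h1 hj [h [HP _ _ _]]]; apply: (@ideal_monoN j) => //; exists h. Qed.

End Ideals.

Section Main.
Variables (K : fieldType) (n : nat) (O : monomial_order n).
Variables (f : nat -> {mpoly K[n]}) (i : nat) (G : seq (sentry K n)).
Local Notation poly := {mpoly K[n]}.
Local Notation mon := 'X_{1..n}.
Local Notation le := (mo_le O).
Local Notation lt := (mo_lt O).
Local Notation E k := (nth (sentry0 K n) G k).
Local Notation gp k := (epol (E k)).
Local Notation sm k := (emon (E k)).
Local Notation sj k := (eidx (E k)).
Implicit Types (P h : poly) (T L : mon).

Hypothesis Hsig : forall k : 'I_(size G),
  in_sig O f i.+1 (gp k) (ecoef (E k)) (sm k) (sj k) /\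
  is_minsig O f i.+1 (gp k) (sm k) (sj k).
Hypothesis Hpair : forall k1 k2 : 'I_(size G),
     let e1 := nth (sentry0 K n) G k1 in let e2 := nth (sentry0 K n) G k2 in
     eidx e1 = i.+1 -> epol e1 <> epol e2 ->
     let t := mlcm (lm O (epol e1)) (lm O (epol e2)) in
     let u := (t - lm O (epol e1))%MM in
     let v := (t - lm O (epol e2))%MM in
     sig_le O ((v + emon e2)%MM, eidx e2) ((u + emon e1)%MM, i.+1) ->
     ((u + emon e1)%MM = (v + emon e2)%MM /\ eidx e2 = i.+1) \/
     (sig_lt O ((v + emon e2)%MM, eidx e2) ((u + emon e1)%MM, i.+1) /\
      exists c : K, std_rep O f i.+1 G c (u + emon e1)%MM
                      (spoly O (epol e1) (epol e2))).
Hypothesis Hnz : forall k : 'I_(size G), sj k = i.+1 -> gp k != 0.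
Hypothesis Hf : exists k : 'I_(size G), sj k = i.+1 /\ sm k = 0%MM.
Hypothesis HGB : forall P, in_ideal f i P -> P != 0 ->
  exists k : 'I_(size G),
    [/\ gp k != 0, (lm O (gp k) <= lm O P)%MM & (sj k <= i)%N].

Definition Good P T := exists k : 'I_(size G),
  [/\ gp k != 0, (lm O (gp k) <= lm O P)%MM &
   sig_le O ((lm O P - lm O (gp k) + sm k)%MM, sj k) (T, i.+1)].
Definition Strict P T := exists k : 'I_(size G),
  [/\ gp k != 0, (lm O (gp k) <= lm O P)%MM &
   sig_lt O ((lm O P - lm O (gp k) + sm k)%MM, sj k) (T, i.+1)].

Lemma strict_good P T : Strict P T -> Good P T.
Proof.
move=> [k [k1 k2 k3]]; exists k; split => //; move: k3.
rewrite /sig_lt /sig_le /= => /orP[->//|/andP[-> /ltW ->]]; by rewrite orbT.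
Qed.

Lemma same_sig (k1 k2 : 'I_(size G)) :
  gp k1 = gp k2 -> sm k1 = sm k2 /\ sj k1 = sj k2.
Proof.
move=> eq12.
have [_ [hs1 hm1]] := Hsig k1; have [_ [hs2 hm2]] := Hsig k2.
have a := hm1 _ _ (eq_ind_r (fun x => in_sig O f i.+1 x 1 (sm k2) (sj k2)) hs2 eq12).
have b := hm2 _ _ (eq_ind (gp k1) (fun x => in_sig O f i.+1 x 1 (sm k1) (sj k1)) hs1 _ eq12).
move: a b; rewrite /sig_le /=.
by case: (ltngtP (sj k1) (sj k2)) => //= hj h1 h2; split => //; exact: le_anti h1 h2.
Qed.

Lemma main_claim T : forall P h, P != 0 -> in_ideal f i (P - h * f i.+1) ->
  bnd O h T -> Good P T.
Proof.
induction T as [T IHT] using (well_founded_induction (mo_wf O)).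
have strict : forall P h, P != 0 -> in_ideal f i (P - h * f i.+1) ->
    sbnd O h T -> Strict P T.
  move=> P h Pnz HI hb; have [h0|hnz] := eqVneq h 0.
    subst h; move: HI; rewrite mul0r subr0 => HI.
    have [k [k1 k2 k3]] := HGB HI Pnz; exists k; split => //.
    by rewrite /sig_lt /= ltnS k3.
  have hl := sbnd_lm hnz hb.
  have [k [k1 k2 k3]] := IHT _ hl P h Pnz HI (@bnd_lm _ _ O h).
  exists k; split => //; move: k3; rewrite /sig_lt /sig_le /=.
  case/orP=> [->//|/andP[-> h3]]; by rewrite (le_lt_trans h3 hl) orbT.
move=> P h Pnz HI hb.
have [c0|cnz] := eqVneq (h@_T) 0.
  by apply: strict_good; apply: (strict P h) => //; apply: bnd_coef0.
set c := h@_T.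
suff inner : forall L (kq : 'I_(size G)), sj kq = i.+1 -> (sm kq <= T)%MM ->
    (T - sm kq + lm O (gp kq))%MM = L -> Good P T.
  have [kf [kf1 kf2]] := Hf; apply: (inner _ kf kf1 _ erefl).
  by rewrite kf2; apply/mnm_lepP => x; rewrite mnmE.
move=> L; induction L as [L IHL] using (well_founded_induction (mo_wf O)).
move=> kq hjq hsq hL.
set q := gp kq; set sq := sm kq.
have qnz : q != 0 := Hnz hjq.
have [hq [HIq hq1 _]] := in_sig_rep (proj1 (Hsig kq)).
have [hqnz hqlc hqlm] := hq1 hjq.
set cq := ecoef (E kq).
have cqnz : cq != 0 by rewrite /cq -hqlc lc_nz.
set w := (T - sq)%MM.
have wsq : (w + sq)%MM = T by rewrite /w submK.
set kap := c / cq.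
have kapnz : kap != 0 by rewrite mulf_neq0 ?invr_eq0.
set P' := P - kap *: ('X_[w] * q).
set h' := h - kap *: ('X_[w] * hq).
have HI' : in_ideal f i (P' - h' * f i.+1).
  have -> : P' - h' * f i.+1 =
      (P - h * f i.+1) - kap *: ('X_[w] * (q - hq * f i.+1)).
    by rewrite /P' /h' -!mul_mpolyC; ring.
  by apply: idealB => //; apply: idealZ; apply: idealM.
have hb' : sbnd O h' T.
  apply: bnd_coef0.
    apply: supp_inB => //; apply: supp_inZ; rewrite -wsq.
    by apply: bndM; [apply: bndX | rewrite /sq -hqlm; apply: bnd_lm].
  rewrite mcoeffB mcoeffZ -{2}wsq coefXM /sq -hqlm.
  by rewrite -/(lc O hq) hqlc /kap divfK // subrr.
have hL' : L = (w + lm O q)%MM by rewrite -hL.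
have lmXq : lm O ('X_[w] * q) = L by rewrite lmXM.
have goodq : lm O P = L -> Good P T.
  move=> hP; exists kq; split => //.
    by rewrite hP hL'; apply: lem_addl.
  rewrite hP hL' addmK wsq /sig_le /= hjq eqxx le_refl; by rewrite orbT.
have [P'0|P'nz] := eqVneq P' 0.
  apply: goodq.
  have -> : P = kap *: ('X_[w] * q) by apply/eqP; rewrite -subr_eq0 -/P' P'0.
  by rewrite lmZ // lmXq.
have [kr [krnz krdiv krsig]] := strict P' h' P'nz HI' hb'.
have [LP|LnP] := eqVneq L (lm O P); first by apply: goodq.
case: (le_total O L (lm O P)) => hLP.
  have hlt : lt L (lm O P) by rewrite ltE hLP LnP.
  have lmP' : lm O P' = lm O P.
    apply: bnd_lmE.
      apply: supp_inB; first exact: bnd_lm.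
      by apply: supp_inZ; apply: (bnd_le _ hLP); rewrite -lmXq; apply: bnd_lm.
    rewrite mcoeffB mcoeffZ (@coef_gt _ _ O ('X_[w] * q) (lm O P)) ?mulr0 ?subr0.
      exact: lc_nz.
    by rewrite lmXq.
  apply: strict_good; exists kr; split => //; by rewrite -lmP'.
have hlt : lt (lm O P) L by rewrite ltE hLP eq_sym LnP.
have lmP' : lm O P' = L.
  apply: bnd_lmE.
    apply: supp_inB; first by apply: (bnd_le (@bnd_lm _ _ O P)); apply: ltW.
    by apply: supp_inZ; rewrite -lmXq; apply: bnd_lm.
  rewrite mcoeffB mcoeffZ (coef_gt hlt) sub0r oppr_eq0 mulf_neq0 //.
  by rewrite hL' coefXM; apply: lc_nz.
rewrite lmP' in krdiv krsig.
set r := gp kr in krnz krdiv krsig.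
have rq : q <> r.
  move=> eqr; have [e1 e2] := same_sig eqr.
  move: krsig; rewrite -eqr -e1 -e2 -/sq hjq hL' addmK wsq.
  by rewrite /sig_lt /= ltnn eqxx /= => hh; exact: (lt_irr hh).
have HP := Hpair hjq rq; simpl in HP.
set t := mlcm (lm O q) (lm O r) in HP.
set u := (t - lm O q)%MM in HP; set v := (t - lm O r)%MM in HP.
have tL : (t <= L)%MM by rewrite lem_mlcm krdiv hL' lem_addl.
have tq : (lm O q <= t)%MM := lem_mlcml _ _.
have tr : (lm O r <= t)%MM := lem_mlcmr _ _.
set w' := (L - t)%MM.
have ww : w = (w' + u)%MM by apply: mon_arith1.
have vv : (L - lm O r)%MM = (w' + v)%MM by apply: mon_arith2.
have Tsig : (w' + (u + sq))%MM = T by rewrite addmA -ww wsq.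
have Lt : (w' + t)%MM = L by rewrite /w' submK.
rewrite vv in krsig.
have hle : sig_le O ((v + sm kr)%MM, sj kr) ((u + sq)%MM, i.+1).
  move: krsig; rewrite /sig_lt /sig_le /=.
  case/orP=> [->//|/andP[-> hl]]; apply/orP; right; apply: ltW.
  by apply: (@lt_addl_canc _ _ w'); rewrite addmA Tsig.
case: (HP hle) => [[e1 e2]|[_ [c' [_ [H [HS Hk]]]]]].
  move: krsig; rewrite -addmA -e1 Tsig e2 /sig_lt /= ltnn eqxx /=.
  by move=> hh; case: (lt_irr hh).
set S := spoly O q r in HS.
set kap2 := lc O q / lc O r.
have lcrnz : lc O r != 0 := lc_nz O krnz.
have Sdef : S = 'X_[u] * q - kap2 *: ('X_[v] * r) by [].
have finish : forall H0 : 'I_(size G) -> poly,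
    S = \sum_k H0 k * gp k ->
    (forall k, H0 k = 0 \/
       sig_lt O ((lm O (H0 k) + sm k)%MM, sj k) ((u + sq)%MM, i.+1)) ->
    Good P T.
  move=> H0 HS0 Hk0.
  have er : forall k : 'I_(size G), exists hh, [/\ in_ideal f i (gp k - hh * f i.+1),
      (sj k = i.+1 -> bnd O hh (sm k)) & (sj k <> i.+1 -> hh = 0)].
    move=> k; have [hh [h1 h2 h3]] := in_sig_rep (proj1 (Hsig k)).
    exists hh; split => // hj; have [_ _ <-] := h2 hj; exact: bnd_lm.
  have [hf Hhf] := fin_all_exists er.
  set Hnew := h' + kap *: ('X_[w'] * (\sum_k H0 k * hf k) +
                     kap2 *: ('X_[(w' + v)%MM] * hf kr)).
  have eqP' : P = P' + kap *: ('X_[w] * q) by rewrite /P' subrK.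
  have eqXq : 'X_[w] * q = 'X_[w'] * S + kap2 *: ('X_[(w' + v)%MM] * r).
    rewrite Sdef ww !mpolyXD -!mul_mpolyC; ring.
  have esum : \sum_k H0 k * (gp k - hf k * f i.+1) =
              S - (\sum_k H0 k * hf k) * f i.+1.
    rewrite HS0 mulr_suml -sumrB; apply: eq_bigr => k _; ring.
  have HIn : in_ideal f i (P - Hnew * f i.+1).
    have -> : P - Hnew * f i.+1 = (P' - h' * f i.+1) +
        kap *: ('X_[w'] * (\sum_k H0 k * (gp k - hf k * f i.+1)) +
                kap2 *: ('X_[(w' + v)%MM] * (r - hf kr * f i.+1))).
      rewrite esum {1}eqP' eqXq /Hnew -!mul_mpolyC; ring.
    apply: idealD => //; apply: idealZ; apply: idealD.
      by apply: idealM; apply: ideal_sum => k; apply: idealM; have [] := Hhf k.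
    by apply: idealZ; apply: idealM; have [] := Hhf kr.
  have hbn : sbnd O Hnew T.
    apply: supp_inD => //; apply: supp_inZ; apply: supp_inD.
      rewrite mulr_sumr; apply: supp_in_sum => k.
      case: (Hk0 k) => [->|]; first by rewrite mul0r mulr0; apply: supp_in0.
      have [_ hk1 hk2] := Hhf k.
      rewrite /sig_lt /= => /orP[hj|/andP[/eqP hj hl]].
        rewrite hk2; [by rewrite !mulr0; apply: supp_in0 | by move=> E'; rewrite E' ltnn in hj].
      apply: (@bnd_lt _ _ _ _ (w' + (lm O (H0 k) + sm k))%MM).
        by apply: bndM; [apply: bndX | apply: bndM; [apply: bnd_lm | apply: hk1]].
      by rewrite -Tsig; apply: lt_addl.
    apply: supp_inZ; have [_ hk1 hk2] := Hhf kr.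
    move: krsig; rewrite /sig_lt /= => /orP[hj|/andP[/eqP hj hl]].
      rewrite hk2; [by rewrite !mulr0; apply: supp_in0 | by move=> E'; rewrite E' ltnn in hj].
    apply: (@bnd_lt _ _ _ _ (w' + v + sm kr)%MM) => //.
    by apply: bndM; [apply: bndX | apply: hk1].
  by apply: strict_good; apply: (strict P Hnew).
have [S0|Snz] := eqVneq S 0.
  apply: (finish (fun _ => 0)); last by move=> k; left.
  by rewrite S0 big1 // => k _; rewrite mul0r.
case: (pickP (fun k => (H k != 0) && (sj k == i.+1) &&
                       ((lm O (H k) + sm k)%MM == (u + sq)%MM))).
  move=> k0 /andP[/andP[hk0nz /eqP hj0] /eqP hex].
  case: (Hk k0) => [hk0|[hlmS _]]; first by rewrite hk0 eqxx in hk0nz.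
  have tqE : (u + lm O q)%MM = t by rewrite /u submK.
  have trE : (v + lm O r)%MM = t by rewrite /v submK.
  have hSt : lt (lm O S) t.
    apply: sbnd_lm => //; apply: bnd_coef0.
      rewrite Sdef; apply: supp_inB; last apply: supp_inZ.
        by rewrite -tqE; apply: bndM; [apply: bndX | apply: bnd_lm].
      by rewrite -trE; apply: bndM; [apply: bndX | apply: bnd_lm].
    rewrite Sdef mcoeffB mcoeffZ -{1}tqE -trE !coefXM.
    by rewrite -/(lc O q) -/(lc O r) /kap2 divfK // subrr.
  have Tk0 : T = (w' + lm O (H k0) + sm k0)%MM by rewrite -Tsig -hex addmA.
  apply: (IHL ((T - sm k0 + lm O (gp k0))%MM) _ k0 hj0 _ erefl).
    rewrite Tk0 addmK -Lt -addmA; apply: (le_lt_trans (le_addl _ hlmS)).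
    exact: lt_addl.
  by rewrite Tk0 lem_addl.
move=> noex; apply: (finish H) => // k.
case: (Hk k) => [->|[_ hs]]; first by left.
have [->|hknz] := eqVneq (H k) 0; first by left.
right; move: hs (noex k); rewrite /sig_le /sig_lt /= hknz /=.
case/orP=> [->//|/andP[/eqP hj hl]]; rewrite hj eqxx /= => hne.
by rewrite ltE hl hne orbT.
Qed.

End Main.

Theorem mainTheorem4 (K : fieldType) (n : nat) (O : monomial_order n)
  (Odeg : degree_compatible O)
  (i : nat) (f : nat -> {mpoly K[n]})
  (f_notin : ~ in_ideal f i (f i.+1))
  (M : nat) (g : 'I_M -> {mpoly K[n]})
  (g_in : forall k, in_ideal f i (g k))
  (g_GB : is_GB O (in_ideal f i) [seq g k | k <- enum 'I_M])
  (l : nat) (p : 'I_l -> {mpoly K[n]}) (d : 'I_l -> K) (tau : 'I_l -> 'X_{1..n})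
  (p_in : forall r, in_ideal f i.+1 (p r)) (p_nz : forall r, p r != 0)
  (d_nz : forall r, d r != 0)
  (sg : 'I_M -> 'X_{1..n}) (jg : 'I_M -> nat) (jg_le : forall k, (jg k <= i)%N) :
  let G : seq (sentry K n) :=
    [seq SEntry 1 (sg k) (jg k) (g k) | k <- enum 'I_M] ++
    SEntry 1 0%MM i.+1 (f i.+1) ::
    [seq SEntry (d r) (tau r) i.+1 (p r) | r <- enum 'I_l] in
  (forall k : 'I_(size G), let e := nth (sentry0 K n) G k in
     in_sig O f i.+1 (epol e) (ecoef e) (emon e) (eidx e) /\
     is_minsig O f i.+1 (epol e) (emon e) (eidx e)) ->
  (forall k1 k2 : 'I_(size G),
     let e1 := nth (sentry0 K n) G k1 in let e2 := nth (sentry0 K n) G k2 in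
     eidx e1 = i.+1 -> epol e1 <> epol e2 ->
     let t := mlcm (lm O (epol e1)) (lm O (epol e2)) in
     let u := (t - lm O (epol e1))%MM in
     let v := (t - lm O (epol e2))%MM in
     sig_le O ((v + emon e2)%MM, eidx e2) ((u + emon e1)%MM, i.+1) ->
     ((u + emon e1)%MM = (v + emon e2)%MM /\ eidx e2 = i.+1) \/
     (sig_lt O ((v + emon e2)%MM, eidx e2) ((u + emon e1)%MM, i.+1) /\
      exists c : K, std_rep O f i.+1 G c (u + emon e1)%MM
                      (spoly O (epol e1) (epol e2)))) ->
  is_GB O (in_ideal f i.+1) [seq epol e | e <- G].
Proof.
move=> G HS HP.
set A := [seq SEntry 1 (sg k) (jg k) (g k) | k <- enum 'I_M].
set B := [seq SEntry (d r) (tau r) i.+1 (p r) | r <- enum 'I_l].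
set fe := SEntry 1 0%MM i.+1 (f i.+1).
have GE : G = A ++ fe :: B by [].
have sA : size A = M by rewrite size_map size_enum_ord.
have sB : size B = l by rewrite size_map size_enum_ord.
have sG : size G = (M + l.+1)%N by rewrite GE size_cat sA /= sB.
have fnz : f i.+1 != 0.
  by apply/eqP => h0; apply: f_notin; rewrite h0; apply: ideal0.
have cls : forall k : nat, (k < size G)%N ->
   (exists k' : 'I_M, nth (sentry0 K n) G k = SEntry 1 (sg k') (jg k') (g k')) \/
   nth (sentry0 K n) G k = fe \/
   (exists r : 'I_l, nth (sentry0 K n) G k = SEntry (d r) (tau r) i.+1 (p r)).
  move=> k hkG; rewrite GE nth_cat sA.
  case: ltnP => hk.
    left; exists (Ordinal hk).
    rewrite (nth_map (Ordinal hk)) ?size_enum_ord //.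
    by have := nth_ord_enum (Ordinal hk) (Ordinal hk); rewrite /= => ->.
  case E: (k - M)%N => [|m] /=; first by right; left.
  have hm : (m < l)%N.
    move: hkG; rewrite sG; move: E hk; clear; lia.
  right; right; exists (Ordinal hm).
  rewrite (nth_map (Ordinal hm)) ?size_enum_ord //.
  by have := nth_ord_enum (Ordinal hm) (Ordinal hm); rewrite /= => ->.
have Hnz : forall k : 'I_(size G), eidx (nth (sentry0 K n) G k) = i.+1 ->
    epol (nth (sentry0 K n) G k) != 0.
  move=> k; case: (cls k (ltn_ord k)) => [[k' ->]|[->|[r ->]]] //= hj.
  by have := jg_le k'; rewrite hj ltnn.
have Hf : exists k : 'I_(size G), eidx (nth (sentry0 K n) G k) = i.+1 /\
    emon (nth (sentry0 K n) G k) = 0%MM.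
  have hM : (M < size G)%N by rewrite sG; clear; lia.
  exists (Ordinal hM); rewrite /= GE nth_cat sA ltnn subnn /=; by split.
have HGB : forall P, in_ideal f i P -> P != 0 ->
    exists k : 'I_(size G), [/\ epol (nth (sentry0 K n) G k) != 0,
      (lm O (epol (nth (sentry0 K n) G k)) <= lm O P)%MM &
      (eidx (nth (sentry0 K n) G k) <= i)%N].
  move=> P HI Pnz; have [g0 hg0 /andP[g0nz g0div]] := g_GB.2 P HI Pnz.
  case/mapP: hg0 => k0 _ E0; subst g0.
  have hk0 : (k0 < size G)%N by rewrite sG; have := ltn_ord k0; clear; lia.
  exists (Ordinal hk0); rewrite /= GE nth_cat sA ltn_ord.
  rewrite (nth_map k0) ?size_enum_ord ?ltn_ord // nth_ord_enum /=.
  by split.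
split.
  move=> q; rewrite GE map_cat /= mem_cat in_cons -!map_comp.
  case/orP=> [/mapP[k _ ->]|/orP[/eqP->|/mapP[r _ ->]]] /=.
  - exact: ideal_mono.
  - by apply/ideal_S; exists 1; rewrite mul1r subrr; apply: ideal0.
  - exact: p_in.
move=> P HI Pnz.
have [h HIh] := (ideal_S f i P).1 HI.
have [k [knz kdiv _]] :=
  main_claim HS HP Hnz Hf HGB Pnz HIh (@bnd_lm _ _ O h).
exists (nth 0 [seq epol e | e <- G] k).
  by apply: mem_nth; rewrite size_map ltn_ord.
by rewrite (nth_map (sentry0 K n)) ?ltn_ord // knz kdiv.
Qed.
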